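(* Let $(X,d)$ be a metric space and $\ell:X\to[0,+\infty)$ lower semicontinuous with $\inf_X\ell=0$. If $\lambda>0$, then $u_\lambda:=T_\lambda^\infty\frac{\ell}{\lambda}$ is the Perron solution of $(\mathcal{G}_\lambda)$. If $\lambda=0$ and $\ell$ satisfies $(H_0)$, then the function \[u_0(x):=\inf\Big\{\sum_{n=0}^\infty\ell(x_n)d(x_n,x_{n+1}):\{x_n\}_n\subset X,\ x_0=x,\ \lim_{n\to\infty}\ell(x_n)=0\Big\},\quad x\in X,\] is the Perron solution of $(\mathcal{G}_0)$.
   Context: Global slope: $G[u](x)=\sup_{y\neq x}\frac{(u(x)-u(y))_+}{d(x,y)}$ if $u(x)<+\infty$, $G[u](x)=+\infty$ otherwise. A solution of $(\mathcal{G}_\lambda)$ ($\lambda\ge0$) is a lower semicontinuous $u:X\to\mathbb{R}\cup\{+\infty\}$ with $\inf_Xu=0$ and $\lambda u+G[u]=\ell$ on $X$. The Perron solution of $(\mathcal{G}_\lambda)$ is a solution $u$ such that $u(x)=\sup\{v(x): v\text{ solution of }(\mathcal{G}_\lambda)\}$ for all $x$. For $u:X\to[0,+\infty]$, $T_\lambda u(x)=\inf_{y\in X}\frac{u(y)+\ell(x)d(x,y)}{1+\lambda d(x,y)}$ and $T_\lambda^\infty u=\lim_{n\to\infty}T_\lambda^nu$ pointwise. Hypothesis $(H_0)$: there is $\{\bar x_n\}_n\subset X$ with $\sum_n\ell(\bar x_n)d(\bar x_n,\bar x_{n+1})<+\infty$ and $\lim_n\ell(\bar x_n)=0$. *)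

(* Defs.v *)
From mathcomp Require Import all_boot all_order all_algebra.
From mathcomp Require Import all_classical all_reals all_analysis.
Set Implicit Arguments. Unset Strict Implicit. Unset Printing Implicit Defensive.
Import Order.TTheory GRing.Theory Num.Theory.
Import numFieldNormedType.Exports.
Local Open Scope classical_set_scope.
Local Open Scope ring_scope.

Section Defs.
Variables (R : realType) (X : Type) (d : X -> X -> R).

Definition is_metric : Prop :=
  [/\ forall x y, 0 <= d x y,
      forall x y, d x y = 0 <-> x = y,
      forall x y, d x y = d y x &
      forall x y z, d x z <= d x y + d y z].

Definition lsc (f : X -> \bar R) : Prop :=
  forall x (t : \bar R), (t < f x)%E ->
    exists2 r : R, 0 < r & forall y, d x y < r -> (t < f y)%E.

Definition G (u : X -> \bar R) (x : X) : \bar R :=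
  if u x == +oo%E then +oo%E
  else ereal_sup ([set 0%E] `|`
         [set (maxe (u x - u y) 0 * ((d x y)^-1)%:E)%E | y in [set y | y <> x]]).

Definition is_solution (ell : X -> R) (lam : R) (u : X -> \bar R) : Prop :=
  [/\ (forall x, u x <> -oo%E),
      lsc u,
      ereal_inf (range u) = 0%E &
      forall x, (lam%:E * u x + G u x)%E = (ell x)%:E].

Definition is_perron_solution (ell : X -> R) (lam : R) (u : X -> \bar R)
  : Prop :=
  is_solution ell lam u /\
  forall x, u x = ereal_sup [set v x | v in is_solution ell lam].

Definition T (ell : X -> R) (lam : R) (u : X -> \bar R) (x : X) : \bar R :=
  ereal_inf [set ((u y + (ell x * d x y)%:E) * ((1 + lam * d x y)^-1)%:E)%E
            | y in [set: X]].

Definition Tinf (ell : X -> R) (lam : R) (u : X -> \bar R) (x : X) : \bar R :=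
  limn (fun n => iter n (T ell lam) u x).

Definition H0 (ell : X -> R) : Prop :=
  exists xs : nat -> X,
    (\sum_(0 <= n <oo) (ell (xs n) * d (xs n) (xs n.+1))%:E < +oo)%E /\
    (fun n => ell (xs n)) @ \oo --> 0.

Definition u0 (ell : X -> R) (x : X) : \bar R :=
  ereal_inf [set (\sum_(0 <= n <oo) (ell (xs n) * d (xs n) (xs n.+1))%:E)%E
            | xs in [set xs : nat -> X | xs 0%N = x /\
                         (fun n => ell (xs n)) @ \oo --> 0]].
End Defs.

(* Main.v *)
Require Import Defs.
From mathcomp Require Import all_boot all_order all_algebra.
From mathcomp Require Import all_classical all_reals all_analysis.
From mathcomp Require Import ring lra.
Import Order.TTheory GRing.Theory Num.Theory.
Local Open Scope classical_set_scope.
Local Open Scope ring_scope.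
Set Implicit Arguments. Unset Strict Implicit.


Lemma met_ge0 (R : realType) (X : Type) (d : X -> X -> R) :
  is_metric d -> forall x y, 0 <= d x y.
Proof. by case. Qed.

Lemma met_xx (R : realType) (X : Type) (d : X -> X -> R) :
  is_metric d -> forall x, d x x = 0.
Proof. by case=> _ H _ _ x; apply/H. Qed.

Lemma met_neq (R : realType) (X : Type) (d : X -> X -> R) :
  is_metric d -> forall x y, x <> y -> 0 < d x y.
Proof.
case=> H0 H _ _ x y xy; rewrite lt_neqAle H0 andbT; apply/eqP => /esym /H.
exact: xy.
Qed.

Lemma met_sym (R : realType) (X : Type) (d : X -> X -> R) :
  is_metric d -> forall x y, d x y = d y x.
Proof. by case. Qed.

Lemma met_tri (R : realType) (X : Type) (d : X -> X -> R) :
  is_metric d -> forall x y z, d x z <= d x y + d y z.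
Proof. by case. Qed.

Lemma G_elem (R : realType) (X : Type) (d : X -> X -> R) (u : X -> \bar R)
  x y a b : u x = a%:E -> u y = b%:E -> y <> x ->
  (((Num.max (a - b) 0) * (d x y)^-1)%:E <= G d u x)%E.
Proof.
move=> ux uy yx; rewrite /G; case: eqP => [|_]; first by rewrite ux.
apply: ereal_sup_ubound; right; exists y => //.
by rewrite ux uy -EFinB -EFin_max.
Qed.

Lemma G_ge0 (R : realType) (X : Type) (d : X -> X -> R) (u : X -> \bar R) x :
  (0 <= G d u x)%E.
Proof.
rewrite /G; case: ifP => _ //; apply: ereal_sup_ubound; by left.
Qed.

Lemma G_le (R : realType) (X : Type) (d : X -> X -> R) (u : X -> \bar R)
  x a (g : R) : u x = a%:E -> 0 <= g ->
  (forall y, y <> x -> exists b, u y = b%:E /\ (Num.max (a - b) 0) * (d x y)^-1 <= g) ->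
  (G d u x <= g%:E)%E.
Proof.
move=> ux g0 H; rewrite /G; case: eqP => [|_]; first by rewrite ux.
apply: ge_ereal_sup => z [-> //|[y yx <-]].
have [b [uy hb]] := H y yx.
by rewrite ux uy -EFinB -EFin_max -EFinM lee_fin.
Qed.

Lemma sol_fin (R : realType) (X : Type) (d : X -> X -> R) ell lam v :
  0 <= lam -> is_solution d ell lam v -> forall x, v x = (fine (v x))%:E.
Proof.
move=> lam0 [vN _ _ eq] x.
case E: (v x) => [r| |] //; last by have := vN x; rewrite E.
have := eq x; rewrite /G E /= => H.
have : (lam%:E * +oo + +oo)%E = +oo%E.
  apply: addey; rewrite mulry; case: (sgrP lam) => //; rewrite ?mul0e ?mul1e //.
  by move=> l0; move: lam0; rewrite leNgt l0.
by rewrite H.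
Qed.

Lemma sol_ge0 (R : realType) (X : Type) (d : X -> X -> R) ell lam v :
  is_solution d ell lam v -> forall x, (0 <= v x)%E.
Proof.
move=> [_ _ inf0 _] x; rewrite -inf0; apply: ereal_inf_lbound; by exists x.
Qed.

Lemma sol_G (R : realType) (X : Type) (d : X -> X -> R) ell lam v :
  0 <= lam -> is_solution d ell lam v -> forall x,
  G d v x = (ell x - lam * fine (v x))%:E.
Proof.
move=> lam0 sv x; have := sol_fin lam0 sv x => vx.
case: (sv) => _ _ _ /(_ x); rewrite vx.
have := @G_ge0 _ _ d v x.
case: (G d v x) => [g| |] //= _.
by rewrite -EFinM -EFinD => -[<-]; congr EFin; rewrite addrC addKr.
Qed.

Lemma sol_ineq (R : realType) (X : Type) (d : X -> X -> R) ell lam v :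
  is_metric d -> 0 <= lam -> is_solution d ell lam v -> forall x y,
  fine (v x) - fine (v y) <= (ell x - lam * fine (v x)) * d x y.
Proof.
move=> md lam0 sv x y.
have [->|yx] := pselect (y = x); first by rewrite subrr met_xx // mulr0.
have := @G_elem _ _ d _ _ _ _ _ (sol_fin lam0 sv x) (sol_fin lam0 sv y) yx.
rewrite (sol_G lam0 sv x) lee_fin => H.
have dpos := met_neq md (nesym yx).
rewrite -ler_pdivrMr //; apply: le_trans H.
apply: ler_wpM2r; first by rewrite invr_ge0 ltW.
by rewrite le_max lexx.
Qed.

Lemma sol_gge0 (R : realType) (X : Type) (d : X -> X -> R) ell lam v :
  0 <= lam -> is_solution d ell lam v -> forall x,
  0 <= ell x - lam * fine (v x).
Proof.
move=> lam0 sv x; have := @G_ge0 _ _ d v x; by rewrite (sol_G lam0 sv x) lee_fin.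
Qed.


Lemma T_ub (R : realType) (X : Type) (d : X -> X -> R) ell lam u x y :
  (T d ell lam u x <=
    (u y + (ell x * d x y)%:E) * ((1 + lam * d x y)^-1)%:E)%E.
Proof. by apply: ereal_inf_lbound; exists y. Qed.

Lemma T_lb (R : realType) (X : Type) (d : X -> X -> R) ell lam u x a :
  (forall y, a <= (u y + (ell x * d x y)%:E) * ((1 + lam * d x y)^-1)%:E)%E ->
  (a <= T d ell lam u x)%E.
Proof. by move=> H; apply: le_ereal_inf_tmp => _ [y _ <-]. Qed.

Lemma fin_between (R : realType) (e : \bar R) (b : R) :
  (0 <= e)%E -> (e <= b%:E)%E -> e = (fine e)%:E.
Proof. by case: e. Qed.

Definition Fi (R : realType) (X : Type) (d : X -> X -> R) ell lam (n : nat) :=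
  iter n (T d ell lam) (fun x => (ell x / lam)%:E).

Definition fi (R : realType) (X : Type) (d : X -> X -> R) ell lam n x :=
  fine (Fi d ell lam n x).

Lemma Fi_fin (R : realType) (X : Type) (d : X -> X -> R) ell lam :
  is_metric d -> (forall x, 0 <= ell x) -> 0 < lam ->
  forall n x, Fi d ell lam n x = (fi d ell lam n x)%:E /\
    0 <= fi d ell lam n x <= ell x / lam.
Proof.
move=> md ell0 lam0; elim=> [|n IH] x.
  by rewrite /fi /= lexx andbT divr_ge0 // ltW.
have H1 : (0 <= Fi d ell lam n.+1 x)%E.
  rewrite /Fi iterS; apply: T_lb => y; rewrite -/(Fi d ell lam n).
  have [-> /andP[a0 _]] := IH y.
  rewrite -EFinD -EFinM lee_fin mulr_ge0 ?addr_ge0 ?mulr_ge0 ?invr_ge0 //.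
    exact: (met_ge0 md x y).
  by rewrite addr_ge0 // (mulr_ge0 (ltW lam0) (met_ge0 md x y)).
have H2 : (Fi d ell lam n.+1 x <= Fi d ell lam n x)%E.
  rewrite /Fi iterS; apply: le_trans (T_ub _ _ _ _ x x) _.
  by rewrite met_xx // mulr0 addr0 mulr0 addr0 invr1 mule1.
have [E /andP[a0 a1]] := IH x.
have H3 : (Fi d ell lam n.+1 x <= (ell x / lam)%:E)%E.
  by apply: le_trans H2 _; rewrite E lee_fin.
have E2 := fin_between H1 H3.
split; first exact: E2.
by move: H1 H3; rewrite /fi E2 !lee_fin => -> ->.
Qed.

Lemma fi_ub (R : realType) (X : Type) (d : X -> X -> R) ell lam :
  is_metric d -> (forall x, 0 <= ell x) -> 0 < lam -> forall n x y,
  fi d ell lam n.+1 x <= (fi d ell lam n y + ell x * d x y) / (1 + lam * d x y).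
Proof.
move=> md ell0 lam0 n x y.
have := T_ub d ell lam (Fi d ell lam n) x y.
rewrite -iterS -/(Fi d ell lam n.+1 x).
by rewrite (Fi_fin md ell0 lam0 n.+1 x).1 (Fi_fin md ell0 lam0 n y).1 -EFinD -EFinM lee_fin.
Qed.

Lemma fi_lb (R : realType) (X : Type) (d : X -> X -> R) ell lam :
  is_metric d -> (forall x, 0 <= ell x) -> 0 < lam -> forall n x b,
  (forall y, b <= (fi d ell lam n y + ell x * d x y) / (1 + lam * d x y)) ->
  b <= fi d ell lam n.+1 x.
Proof.
move=> md ell0 lam0 n x b H.
have : (b%:E <= T d ell lam (Fi d ell lam n) x)%E.
  apply: T_lb => y; by rewrite (Fi_fin md ell0 lam0 n y).1 -EFinD -EFinM lee_fin.
rewrite -iterS -/(Fi d ell lam n.+1 x).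
by rewrite (Fi_fin md ell0 lam0 n.+1 x).1 lee_fin.
Qed.

Lemma fi_dec (R : realType) (X : Type) (d : X -> X -> R) ell lam :
  is_metric d -> (forall x, 0 <= ell x) -> 0 < lam -> forall n x,
  fi d ell lam n.+1 x <= fi d ell lam n x.
Proof.
move=> md ell0 lam0 n x; apply: le_trans (fi_ub md ell0 lam0 n x x) _.
by rewrite met_xx // !mulr0 !addr0 invr1 mulr1.
Qed.

Lemma Tinf_inf (R : realType) (X : Type) (d : X -> X -> R) ell lam :
  is_metric d -> (forall x, 0 <= ell x) -> 0 < lam -> forall x,
  Tinf d ell lam (fun x => (ell x / lam)%:E) x =
  ereal_inf (range (fun n => Fi d ell lam n x)).
Proof.
move=> md ell0 lam0 x; rewrite /Tinf; apply: cvg_lim => //.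
apply: ereal_nonincreasing_cvgn; apply/nonincreasing_seqP => n.
rewrite -/(Fi d ell lam n.+1 x) -/(Fi d ell lam n x).
rewrite (Fi_fin md ell0 lam0 n.+1 x).1 (Fi_fin md ell0 lam0 n x).1 lee_fin.
exact: fi_dec.
Qed.

Definition Ur (R : realType) (X : Type) (d : X -> X -> R) ell lam x :=
  fine (Tinf d ell lam (fun x => (ell x / lam)%:E) x).

Lemma Ur_fin (R : realType) (X : Type) (d : X -> X -> R) ell lam :
  is_metric d -> (forall x, 0 <= ell x) -> 0 < lam -> forall x,
  Tinf d ell lam (fun x => (ell x / lam)%:E) x = (Ur d ell lam x)%:E.
Proof.
move=> md ell0 lam0 x; rewrite /Ur; apply: (@fin_between _ _ (ell x / lam)).
  rewrite Tinf_inf //; apply: le_ereal_inf_tmp => _ [n _ <-].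
  by rewrite (Fi_fin md ell0 lam0 n x).1 lee_fin; case/andP: (Fi_fin md ell0 lam0 n x).2.
rewrite Tinf_inf //; apply: ereal_inf_lbound; by exists 0%N.
Qed.

Lemma Ur_le (R : realType) (X : Type) (d : X -> X -> R) ell lam :
  is_metric d -> (forall x, 0 <= ell x) -> 0 < lam -> forall n x,
  Ur d ell lam x <= fi d ell lam n x.
Proof.
move=> md ell0 lam0 n x.
have : (Tinf d ell lam (fun x => (ell x / lam)%:E) x <= Fi d ell lam n x)%E.
  rewrite Tinf_inf //; apply: ereal_inf_lbound; by exists n.
by rewrite Ur_fin // (Fi_fin md ell0 lam0 n x).1 lee_fin.
Qed.

Lemma Ur_lb (R : realType) (X : Type) (d : X -> X -> R) ell lam :
  is_metric d -> (forall x, 0 <= ell x) -> 0 < lam -> forall x b,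
  (forall n, b <= fi d ell lam n x) -> b <= Ur d ell lam x.
Proof.
move=> md ell0 lam0 x b H.
have : (b%:E <= Tinf d ell lam (fun x => (ell x / lam)%:E) x)%E.
  rewrite Tinf_inf //; apply: le_ereal_inf_tmp => _ [n _ <-].
  by rewrite (Fi_fin md ell0 lam0 n x).1 lee_fin.
by rewrite Ur_fin // lee_fin.
Qed.


Lemma Ur_ge0 (R : realType) (X : Type) (d : X -> X -> R) ell lam :
  is_metric d -> (forall x, 0 <= ell x) -> 0 < lam -> forall x,
  0 <= Ur d ell lam x.
Proof.
move=> md ell0 lam0 x; apply: Ur_lb => // n.
by case/andP: (Fi_fin md ell0 lam0 n x).2.
Qed.

Lemma Ur_leell (R : realType) (X : Type) (d : X -> X -> R) ell lam :
  is_metric d -> (forall x, 0 <= ell x) -> 0 < lam -> forall x,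
  Ur d ell lam x <= ell x / lam.
Proof. by move=> md ell0 lam0 x; apply: (Ur_le md ell0 lam0 0%N x). Qed.

Lemma Ur_approx (R : realType) (X : Type) (d : X -> X -> R) ell lam :
  is_metric d -> (forall x, 0 <= ell x) -> 0 < lam -> forall y e, 0 < e ->
  exists n, fi d ell lam n y < Ur d ell lam y + e.
Proof.
move=> md ell0 lam0 y e e0.
have : ~ (forall n, Ur d ell lam y + e <= fi d ell lam n y).
  move/(Ur_lb md ell0 lam0); by rewrite gerDl leNgt e0.
by move/existsNP => [n]; move/negP; rewrite -ltNge => H; exists n.
Qed.

Lemma Ur_fix (R : realType) (X : Type) (d : X -> X -> R) ell lam :
  is_metric d -> (forall x, 0 <= ell x) -> 0 < lam -> forall x y,
  Ur d ell lam x * (1 + lam * d x y) <= Ur d ell lam y + ell x * d x y.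
Proof.
move=> md ell0 lam0 x y.
have dge0 : 0 <= d x y by exact: (met_ge0 md x y).
have D1 : 1 <= 1 + lam * d x y by rewrite lerDl mulr_ge0 // ltW.
have D0 : 0 < 1 + lam * d x y by apply: lt_le_trans D1.
apply/ler_addgt0Pr => e e0.
have [n Hn] := Ur_approx md ell0 lam0 y e0.
have H1 := Ur_le md ell0 lam0 n.+1 x.
have H2 := fi_ub md ell0 lam0 n x y.
have H3 : Ur d ell lam x * (1 + lam * d x y) <= fi d ell lam n y + ell x * d x y.
  rewrite -ler_pdivlMr //; exact: le_trans H1 H2.
have H4 : e <= e * (1 + lam * d x y) by rewrite ler_peMr // ltW.
move: H3 H4 Hn; set D := 1 + lam * d x y; set a := Ur d ell lam x.
set b := fi d ell lam n y; set c := Ur d ell lam y.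
move=> H3 H4 Hn.
lra.
Qed.

Lemma Ur_inv (R : realType) (X : Type) (d : X -> X -> R) ell lam :
  is_metric d -> (forall x, 0 <= ell x) -> 0 < lam -> forall x c r M,
  M <= 0 -> 0 < r -> (forall z, d x z < r -> c <= ell z) ->
  (forall w, r <= d x w -> c / lam + (1 + lam * d x w) * M <= Ur d ell lam w) ->
  c / lam + M <= Ur d ell lam x.
Proof.
move=> md ell0 lam0 x c r M M0 r0 Hc Hw.
have lamn0 : lam != 0 by rewrite gt_eqF.
suff H : forall n z, d x z < r ->
    c / lam + (1 + lam * d x z) * M <= fi d ell lam n z.
  apply: Ur_lb => // n; have := H n x; rewrite met_xx // mulr0 addr0 mul1r.
  by apply.
elim=> [|n IH] z xz.
  rewrite /fi /=.
  have h1 : c / lam <= ell z / lam by rewrite ler_pM2r ?invr_gt0 // Hc.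
  have h2 : (1 + lam * d x z) * M <= 0.
    by rewrite mulr_ge0_le0 // addr_ge0 // (mulr_ge0 (ltW lam0) (met_ge0 md x z)).
  lra.
apply: fi_lb => // y.
have dzy : 0 <= d z y by exact: (met_ge0 md z y).
have dxz : 0 <= d x z by exact: (met_ge0 md x z).
have dxy : 0 <= d x y by exact: (met_ge0 md x y).
have tri : d x y <= d x z + d z y by exact: (met_tri md x z y).
have D0 : 0 < 1 + lam * d z y by rewrite ltr_pwDl // (mulr_ge0 (ltW lam0) dzy).
have Hy : c / lam + (1 + lam * d x y) * M <= fi d ell lam n y.
  case: (ltP (d x y) r) => [/IH //|/Hw]; move=> h; apply: le_trans h _.
  exact: Ur_le.
have Hl : c * d z y <= ell z * d z y by rewrite ler_wpM2r // Hc.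
have Htri : (1 + lam * d x y) <= (1 + lam * d x z) * (1 + lam * d z y).
  have : 0 <= lam * d x z * (lam * d z y) by rewrite !mulr_ge0 // ltW.
  have : lam * d x y <= lam * d x z + lam * d z y by rewrite -mulrDr ler_pM2l.
  move=> h1 h2; rewrite mulrDl !mulrDr !mul1r mulr1; lra.
have HM : (1 + lam * d x z) * (1 + lam * d z y) * M <= (1 + lam * d x y) * M.
  by rewrite ler_wnM2r.
have E : c / lam * (1 + lam * d z y) = c / lam + c * d z y.
  by field.
rewrite ler_pdivlMr // mulrDl E.
rewrite -mulrA [M * _]mulrC mulrA.
lra.
Qed.

Lemma Ur_G_ge (R : realType) (X : Type) (d : X -> X -> R) ell lam :
  is_metric d -> (forall x, 0 <= ell x) -> 0 < lam ->
  lsc d (fun x => (ell x)%:E) -> forall x,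
  ((ell x - lam * Ur d ell lam x)%:E <=
     G d (Tinf d ell lam (fun x => (ell x / lam)%:E)) x)%E.
Proof.
move=> md ell0 lam0 hlsc x.
have lamn0 : lam != 0 by rewrite gt_eqF.
apply/lee_subgt0Pr => eta eta0; rewrite -EFinB.
set g := ell x - lam * Ur d ell lam x.
case: (leP g eta) => gle.
  apply: le_trans (G_ge0 _ _ x); by rewrite lee_fin subr_le0.
set c := ell x - eta / 2.
have cx : (c%:E < (ell x)%:E)%E by rewrite lte_fin /c; lra.
have [r r0 Hr] := hlsc x c%:E cx.
have Hc : forall z, d x z < r -> c <= ell z.
  by move=> z /Hr; rewrite lte_fin => /ltW.
have rl0 : 0 < lam * r + 1 by rewrite ltr_wpDl // mulr_ge0 ?ltW.
set eps := eta * r / (2 * (lam * r + 1)).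
have eps0 : 0 < eps by rewrite /eps divr_gt0 ?mulr_gt0.
have Eeps : eps * (lam * r + 1) = eta * r / 2.
  by rewrite /eps; field; rewrite gt_eqF.
set q := eta / 2 - lam * eps.
have Eq : r * q = eps.
  by rewrite /q mulrBr; move: Eeps; rewrite mulrDr mulr1 => Ee; lra.
have q0 : 0 < q by rewrite -(pmulr_rgt0 _ r0) Eq.
set M := Ur d ell lam x - c / lam + eps.
have LM : lam * M = - (g - eta + q).
  by rewrite /M /g /q /c; field.
have M0 : M <= 0.
  have : lam * M <= 0 by rewrite LM oppr_le0; lra.
  by rewrite pmulr_rle0.
have notinv : ~ (forall w, r <= d x w ->
    c / lam + (1 + lam * d x w) * M <= Ur d ell lam w).
  move=> H; have := Ur_inv md ell0 lam0 M0 r0 Hc H.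
  by rewrite /M; lra.
move/existsNP: notinv => [w /not_implyP [rw Hw]].
have Hw' : Ur d ell lam w < c / lam + (1 + lam * d x w) * M.
  by rewrite ltNge; apply/negP.
have D0 : 0 < d x w by apply: lt_le_trans rw.
have wx : w <> x by move=> wx; move: D0; rewrite wx met_xx // ltxx.
apply: le_trans (@G_elem _ _ d _ _ _ _ _ (Ur_fin md ell0 lam0 x) (Ur_fin md ell0 lam0 w) wx).
rewrite lee_fin.
apply: (@le_trans _ _ ((Ur d ell lam x - Ur d ell lam w) / d x w)); last first.
  by apply: ler_wpM2r; [rewrite invr_ge0 ltW | rewrite le_max lexx].
rewrite ler_pdivlMr //.
have E4 : (1 + lam * d x w) * M = M - d x w * (g - eta) - d x w * q.
  by rewrite mulrDl mul1r [lam * _]mulrC -mulrA LM; ring.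
have Dq : eps <= d x w * q by rewrite -Eq ler_pM2r.
move: Hw'; rewrite E4 /M => Hw'.
lra.
Qed.


Lemma part_pos (R : realType) (X : Type) (d : X -> X -> R) ell lam :
  is_metric d -> (forall x, 0 <= ell x) -> lsc d (fun x => (ell x)%:E) ->
  ereal_inf (range (fun x => (ell x)%:E)) = 0%E -> 0 < lam ->
  is_perron_solution d ell lam (Tinf d ell lam (fun x => (ell x / lam)%:E)).
Proof.
move=> md ell0 hlsc inf0 lam0.
have lamn0 : lam != 0 by rewrite gt_eqF.
have UF := Ur_fin md ell0 lam0.
have U0 := Ur_ge0 md ell0 lam0.
have Ul := Ur_leell md ell0 lam0.
have Uf := Ur_fix md ell0 lam0.
have lUl : forall x, lam * Ur d ell lam x <= ell x.
  by move=> x; rewrite mulrC -ler_pdivlMr.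
have sol : is_solution d ell lam (Tinf d ell lam (fun x => (ell x / lam)%:E)).
  split.
  - by move=> x; rewrite UF.
  - move=> x t; rewrite UF; case: t => [s| |] //; last first.
      by move=> _; exists 1 => // y _; rewrite UF ltNye.
    rewrite lte_fin => sx.
    have l1 : 0 < ell x + 1 by rewrite ltr_wpDl.
    exists ((Ur d ell lam x - s) / (ell x + 1)); first by rewrite divr_gt0 // subr_gt0.
    move=> y dxy; rewrite UF lte_fin.
    have h1 : (ell x + 1) * d x y < Ur d ell lam x - s by move: dxy; rewrite ltr_pdivlMr // mulrC.
    have h2 : 0 <= d x y by exact: (met_ge0 md x y).
    have h3 : 0 <= lam * d x y * Ur d ell lam x by rewrite !mulr_ge0 // ltW.
    have h4 := Uf x y.
    lra.
  - apply/le_anti/andP; split; last first.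
      by apply: le_ereal_inf_tmp => _ [y _ <-]; rewrite UF lee_fin.
    apply/lee_addgt0Pr => e e0; rewrite add0e.
    have : (ereal_inf (range (fun x => (ell x)%:E)) < (e * lam)%:E)%E.
      by rewrite inf0 lte_fin mulr_gt0.
    move/ereal_inf_lt => [_ [y _ <-]]; rewrite lte_fin => hy.
    apply: le_trans (_ : Tinf d ell lam (fun x => (ell x / lam)%:E) y <= _)%E.
      by apply: ereal_inf_lbound; exists y.
    rewrite UF lee_fin; apply: le_trans (Ul y) _.
    by rewrite ler_pdivrMr // ltW.
  - move=> x.
    have -> : G d (Tinf d ell lam (fun x => (ell x / lam)%:E)) x =
              (ell x - lam * Ur d ell lam x)%:E.
      apply/le_anti/andP; split; last exact: Ur_G_ge.
      apply: G_le; first exact: UF; first by rewrite subr_ge0.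
      move=> y yx; exists (Ur d ell lam y); split; first exact: UF.
      have D0 : 0 < d x y by apply: (met_neq md); apply/nesym.
      rewrite ler_pdivrMr // ge_max; apply/andP; split.
        have := Uf x y; lra.
      by rewrite mulr_ge0 // ?subr_ge0 // ltW.
    by rewrite UF -EFinM -EFinD; congr EFin; ring.
split => // x.
apply/le_anti/andP; split; first by apply: ereal_sup_ubound; exists (Tinf d ell lam (fun x => (ell x / lam)%:E)).
apply: ge_ereal_sup => _ [v sv <-].
rewrite (sol_fin (ltW lam0) sv) UF lee_fin.
apply: Ur_lb => // n; elim: n x => [|n IH] z.
  have := sol_gge0 (ltW lam0) sv z => h.
  rewrite /fi /= ler_pdivlMr // mulrC; lra.
apply: fi_lb => // y.
have D0 : 0 < 1 + lam * d z y by rewrite ltr_pwDl // (mulr_ge0 (ltW lam0) (met_ge0 md z y)).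
rewrite ler_pdivlMr //.
have h1 := sol_ineq md (ltW lam0) sv z y.
have h2 := IH y.
lra.
Qed.


Lemma series_shift (R : realType) (f : nat -> \bar R) N :
  (forall k, (0 <= f k)%E) ->
  (\sum_(N <= k <oo) f k = \sum_(0 <= k <oo) f (k + N)%N)%E.
Proof.
move=> f0.
have cv : cvgn (fun n => (\sum_(N <= k < n) f k)%E).
  by apply: is_cvg_ereal_nneg_natsum => n _.
apply/esym/cvg_lim => //.
have -> : (fun n => (\sum_(0 <= k < n) f (k + N)%N)%E) =
          (fun n => (\sum_(N <= k < n + N) f k)%E).
  apply/funext => n; have := big_addn 0 (n + N) N xpredT f; rewrite addnK add0n => ->; by [].
have := cv; rewrite -(cvg_shiftn N); apply.
Qed.

Lemma series_sup (R : realType) (f : nat -> \bar R) :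
  (forall k, (0 <= f k)%E) ->
  (\sum_(0 <= k <oo) f k =
    ereal_sup (range (fun n => \sum_(0 <= k < n) f k)))%E.
Proof.
move=> f0; apply: cvg_lim => //; apply: ereal_nondecreasing_cvgn.
exact: ereal_nondecreasing_series.
Qed.

Definition pcost (R : realType) (X : Type) (d : X -> X -> R) (ell : X -> R)
  (xs : nat -> X) : \bar R :=
  (\sum_(0 <= n <oo) (ell (xs n) * d (xs n) (xs n.+1))%:E)%E.

Definition scons (X : Type) (x : X) (xs : nat -> X) : nat -> X :=
  fun n => if n is m.+1 then xs m else x.

Definition sshift (X : Type) (N : nat) (xs : nat -> X) : nat -> X :=
  fun n => xs (n + N)%N.

Lemma cost_split (R : realType) (X : Type) (d : X -> X -> R) ell xs N :
  is_metric d -> (forall x, 0 <= ell x) ->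
  pcost d ell xs = ((\sum_(0 <= k < N) (ell (xs k) * d (xs k) (xs k.+1)))%:E
     + pcost d ell (sshift N xs))%E.
Proof.
move=> md ell0.
have t0 : forall k, (0 <= (ell (xs k) * d (xs k) (xs k.+1))%:E)%E.
  by move=> k; rewrite lee_fin mulr_ge0 //; exact: (met_ge0 md).
rewrite /pcost (nneseries_split 0 N); last by move=> k _; exact: t0.
rewrite add0n -sumEFin series_shift //.
Qed.

Lemma cost_ge0 (R : realType) (X : Type) (d : X -> X -> R) ell xs :
  is_metric d -> (forall x, 0 <= ell x) -> (0 <= pcost d ell xs)%E.
Proof.
move=> md ell0; apply: nneseries_ge0 => n _ _.
by rewrite lee_fin mulr_ge0 //; exact: (met_ge0 md).
Qed.

Lemma cost_scons (R : realType) (X : Type) (d : X -> X -> R) ell x xs :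
  is_metric d -> (forall x, 0 <= ell x) ->
  pcost d ell (scons x xs) = ((ell x * d x (xs 0%N))%:E + pcost d ell xs)%E.
Proof.
move=> md ell0; rewrite (cost_split (scons x xs) 1 md ell0) big_nat1 /=.
congr (_ + _)%E; congr (pcost d ell _); apply/funext => n.
by rewrite /sshift addn1.
Qed.

Lemma cost_partial (R : realType) (X : Type) (d : X -> X -> R) ell xs N :
  is_metric d -> (forall x, 0 <= ell x) ->
  ((\sum_(0 <= k < N) (ell (xs k) * d (xs k) (xs k.+1)))%:E <= pcost d ell xs)%E.
Proof.
move=> md ell0; rewrite -sumEFin; apply: (@nneseries_lim_ge _ _ xpredT 0 N).
by move=> n _ _; rewrite lee_fin mulr_ge0 //; exact: (met_ge0 md).
Qed.

Lemma cost_approx (R : realType) (X : Type) (d : X -> X -> R) ell xs (s e : R) :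
  is_metric d -> (forall x, 0 <= ell x) -> pcost d ell xs = s%:E -> 0 < e ->
  exists N, s - e < \sum_(0 <= k < N) (ell (xs k) * d (xs k) (xs k.+1)).
Proof.
move=> md ell0 cs e0.
have : ((s - e)%:E < pcost d ell xs)%E by rewrite cs lte_fin ltrBlDr ltrDl.
rewrite /pcost series_sup; last first.
  by move=> k; rewrite lee_fin mulr_ge0 //; exact: (met_ge0 md).
move/ereal_sup_gt => [_ [N _ <-]]; rewrite sumEFin lte_fin => h; by exists N.
Qed.

Lemma tri_sum (R : realType) (X : Type) (d : X -> X -> R) xs k :
  is_metric d -> d (xs 0%N) (xs k) <= \sum_(0 <= i < k) d (xs i) (xs i.+1).
Proof.
move=> md; elim: k => [|k IH]; first by rewrite big_geq // met_xx.
rewrite big_nat_recr //=; apply: le_trans (met_tri md _ (xs k) _) _.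
by rewrite lerD2r.
Qed.


Lemma u0_le (R : realType) (X : Type) (d : X -> X -> R) ell x xs :
  xs 0%N = x -> (fun n => ell (xs n)) @ \oo --> 0 -> (u0 d ell x <= pcost d ell xs)%E.
Proof. by move=> h1 h2; apply: ereal_inf_lbound; exists xs. Qed.

Lemma u0_lb (R : realType) (X : Type) (d : X -> X -> R) ell x a :
  (forall xs, xs 0%N = x -> (fun n => ell (xs n)) @ \oo --> 0 -> (a <= pcost d ell xs)%E) ->
  (a <= u0 d ell x)%E.
Proof. by move=> H; apply: le_ereal_inf_tmp => _ [xs [h1 h2] <-]; apply: H. Qed.

Lemma scons_cvg (R : realType) (X : Type) (ell : X -> R) x xs :
  (fun n => ell (xs n)) @ \oo --> 0 -> (fun n => ell (scons x xs n)) @ \oo --> 0.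
Proof.
move=> H; apply/cvgrPdist_lt => e e0.
have [N _ HN] := (cvgrPdist_lt _ _).1 H e e0.
by exists N.+1 => // n /= Nn; case: n Nn => // m Nm; apply: HN.
Qed.

Lemma shift_cvg (R : realType) (X : Type) (ell : X -> R) N xs :
  (fun n => ell (xs n)) @ \oo --> 0 -> (fun n => ell (sshift N xs n)) @ \oo --> 0.
Proof. by move=> H; exact: (cvg_comp _ _ (cvg_addnr N) H). Qed.

Lemma u0_ge0 (R : realType) (X : Type) (d : X -> X -> R) ell x :
  is_metric d -> (forall x, 0 <= ell x) -> (0 <= u0 d ell x)%E.
Proof. by move=> md ell0; apply: u0_lb => xs _ _; exact: cost_ge0. Qed.

Lemma u0_tri (R : realType) (X : Type) (d : X -> X -> R) ell x y :
  is_metric d -> (forall x, 0 <= ell x) ->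
  (u0 d ell x <= (ell x * d x y)%:E + u0 d ell y)%E.
Proof.
move=> md ell0; rewrite -leeBlDl //; apply: u0_lb => xs h1 h2.
rewrite leeBlDl //; rewrite -h1 -cost_scons //.
by apply: u0_le => //; apply: scons_cvg.
Qed.

Lemma u0_lty (R : realType) (X : Type) (d : X -> X -> R) ell x :
  is_metric d -> (forall x, 0 <= ell x) -> H0 d ell -> (u0 d ell x < +oo)%E.
Proof.
move=> md ell0 [xb [hs hc]].
apply: le_lt_trans (@u0_le _ _ d ell x (scons x xb) erefl (@scons_cvg _ _ ell x xb hc)) _.
by rewrite cost_scons // lte_add_pinfty // ltry.
Qed.

Definition U0r (R : realType) (X : Type) (d : X -> X -> R) ell x :=
  fine (u0 d ell x).

Lemma U0_fin (R : realType) (X : Type) (d : X -> X -> R) ell x :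
  is_metric d -> (forall x, 0 <= ell x) -> H0 d ell ->
  u0 d ell x = (U0r d ell x)%:E.
Proof.
move=> md ell0 h0; have := u0_ge0 x md ell0; have := u0_lty x md ell0 h0.
by rewrite /U0r; case: (u0 d ell x).
Qed.

Lemma U0_tri (R : realType) (X : Type) (d : X -> X -> R) ell x y :
  is_metric d -> (forall x, 0 <= ell x) -> H0 d ell ->
  U0r d ell x - U0r d ell y <= ell x * d x y.
Proof.
move=> md ell0 h0; have := u0_tri x y md ell0.
rewrite !U0_fin // -EFinD lee_fin; lra.
Qed.


Lemma liminf_lemma (R : realType) (a dd : nat -> R) (C s e : R) :
  (forall n, 0 <= a n) -> (forall n, 0 <= dd n) -> a n @[n --> \oo] --> 0 ->
  0 < C -> 0 < e ->
  (forall e', 0 < e' -> exists N, s - e' < \sum_(0 <= i < N) a i * dd i) ->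
  (forall N, \sum_(0 <= i < N) a i * dd i <= s) ->
  exists N, a N * (\sum_(0 <= i < N) dd i + C) <= e.
Proof.
move=> a0 d0 ha C0 e0 happ hle.
apply: contrapT => /forallNP H.
have H' : forall N, e < a N * (\sum_(0 <= i < N) dd i + C).
  by move=> N; rewrite ltNge; apply/negP; exact: H N.
pose L N := \sum_(0 <= i < N) dd i.
have Lsplit : forall i k, (i <= k)%N -> L k = L i + \sum_(i <= j < k) dd j.
  by move=> i k ik; rewrite /L (big_cat_nat (leq0n i) ik).
have Lmono : forall i k, (i <= k)%N -> L i <= L k.
  by move=> i k ik; rewrite (Lsplit i k ik) lerDl sumr_ge0.
have L0 : forall k, 0 <= L k by move=> k; rewrite sumr_ge0.
have [N0 hN0] := happ (e / 2) (divr_gt0 e0 (ltr0Sn _ 1)).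
have bnd : forall k, (N0 <= k)%N -> L k < 2 * L N0 + C.
  move=> k Nk.
  have LC : 0 < L k + C by rewrite ltr_wpDl.
  set q := e / (L k + C).
  have q0 : 0 < q by rewrite divr_gt0.
  have qE : q * (L k + C) = e by rewrite /q divfK // gt_eqF.
  have h1 : \sum_(N0 <= i < k) q * dd i <= \sum_(N0 <= i < k) a i * dd i.
    apply: ler_sum_nat => i /andP[Ni ik]; apply: ler_wpM2r => //.
    rewrite /q ler_pdivrMr //; apply: ltW; apply: lt_le_trans (H' i) _.
    by rewrite ler_wpM2l // lerD2r; apply: Lmono; apply: ltnW.
  have h2 : \sum_(0 <= i < k) a i * dd i =
       \sum_(0 <= i < N0) a i * dd i + \sum_(N0 <= i < k) a i * dd i.
    by rewrite (big_cat_nat (leq0n N0) Nk).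
  have h3 : \sum_(N0 <= i < k) q * dd i = q * (L k - L N0).
    by rewrite -mulr_sumr (Lsplit N0 k Nk) addrC addKr.
  have h4 := hle k.
  have h5 : q * (L k - L N0) < q * ((L k + C) / 2).
    rewrite mulrA qE; lra.
  rewrite ltr_pM2l // in h5; lra.
set B := 2 * L N0 + 2 * C.
have B0 : 0 < B by rewrite /B ltr_wpDl ?mulr_ge0 // mulr_gt0.
have [K _ HK] := (cvgrPdist_lt _ _).1 ha (e / B) (divr_gt0 e0 B0).
set k := maxn K N0.
have hk : a k < e / B.
  have := HK k (leq_maxl K N0); rewrite /= sub0r normrN => h.
  by apply: le_lt_trans h; exact: ler_norm.
have hb := bnd k (leq_maxr K N0).
have h6 : a k * (L k + C) <= a k * B by rewrite ler_wpM2l //; rewrite /B; lra.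
have h7 : a k * B < e by rewrite -ltr_pdivlMr.
have := H' k; rewrite -/(L k); lra.
Qed.


Lemma U0_G_ge (R : realType) (X : Type) (d : X -> X -> R) ell :
  is_metric d -> (forall x, 0 <= ell x) -> lsc d (fun x => (ell x)%:E) ->
  H0 d ell -> forall x, ((ell x)%:E <= G d (u0 d ell) x)%E.
Proof.
move=> md ell0 hlsc h0 x.
have UF := fun z => U0_fin z md ell0 h0.
apply/lee_subgt0Pr => eta eta0; rewrite -EFinB.
case: (leP (ell x) eta) => le.
  apply: le_trans (G_ge0 _ _ x); by rewrite lee_fin subr_le0.
set c := ell x - eta / 2.
have c0 : 0 < c by rewrite /c; lra.
have cx : (c%:E < (ell x)%:E)%E by rewrite lte_fin /c; lra.
have [r r0 Hr] := hlsc x c%:E cx.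
set eps := eta * r / 2.
have eps0 : 0 < eps by rewrite /eps divr_gt0 ?mulr_gt0.
have : (u0 d ell x < (U0r d ell x + eps)%:E)%E by rewrite UF lte_fin ltrDl.
move/ereal_inf_lt => [_ [xs [xs0 hcv] <-] hlt0].
have hlt : (pcost d ell xs < (U0r d ell x + eps)%:E)%E := hlt0.
have exN : exists n, r <= d x (xs n).
  have [N _ HN] := (cvgrPdist_lt _ _).1 hcv c c0.
  exists N; have := HN N (leqnn N); rewrite /= sub0r normrN => h.
  have hl : ell (xs N) < c by apply: le_lt_trans h; exact: ler_norm.
  rewrite leNgt; apply/negP => /Hr; rewrite lte_fin => hc; lra.
case: (ex_minnP exN) => k rk kmin.
have inside : forall i, (i < k)%N -> c <= ell (xs i).
  move=> i ik; have : d x (xs i) < r.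
    rewrite ltNge; apply/negP => ri; have := kmin i ri; rewrite leqNgt ik //.
  by move/Hr; rewrite lte_fin => /ltW.
set w := xs k.
have hsplit := cost_split xs k md ell0.
have hw : (u0 d ell w <= pcost d ell (sshift k xs))%E.
  apply: u0_le; first by [].
  exact: shift_cvg.
set S := \sum_(0 <= i < k) ell (xs i) * d (xs i) (xs i.+1).
set L := \sum_(0 <= i < k) d (xs i) (xs i.+1).
have h1 : S + U0r d ell w < U0r d ell x + eps.
  rewrite -lte_fin EFinD -(UF w); apply: le_lt_trans hlt.
  by rewrite hsplit; apply: leeD => //; exact: hw.
have h2 : c * L <= S.
  rewrite /L /S mulr_sumr; apply: ler_sum_nat => i /andP[_ ik].
  by rewrite ler_wpM2r //; [exact: (met_ge0 md) | exact: inside].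
have h3 : d x w <= L by rewrite /w -{1}xs0; exact: tri_sum.
have h4 : c * d x w <= c * L by rewrite ler_wpM2l // ltW.
have D0 : 0 < d x w by apply: lt_le_trans rk.
have wx : w <> x by move=> wx; move: D0; rewrite wx met_xx // ltxx.
apply: le_trans (@G_elem _ _ d _ _ _ _ _ (UF x) (UF w) wx).
rewrite lee_fin.
apply: (@le_trans _ _ ((U0r d ell x - U0r d ell w) / d x w)); last first.
  by apply: ler_wpM2r; [rewrite invr_ge0 ltW | rewrite le_max lexx].
rewrite ler_pdivlMr //.
have h5 : eta * r <= eta * d x w by rewrite ler_wpM2l // ltW.
have h6 : c * d x w = ell x * d x w - eta * d x w / 2 by rewrite /c; ring.
have h7 : eps = eta * r / 2 by [].
lra.
Qed.

Lemma part_zero (R : realType) (X : Type) (d : X -> X -> R) ell :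
  is_metric d -> (forall x, 0 <= ell x) -> lsc d (fun x => (ell x)%:E) ->
  ereal_inf (range (fun x => (ell x)%:E)) = 0%E ->
  H0 d ell -> is_perron_solution d ell 0 (u0 d ell).
Proof.
move=> md ell0 hlsc inf0 h0.
have UF := fun z => U0_fin z md ell0 h0.
have Utri := fun x y => U0_tri x y md ell0 h0.
have U0 : forall x, 0 <= U0r d ell x.
  by move=> x; have := u0_ge0 x md ell0; rewrite UF lee_fin.
have sol : is_solution d ell 0 (u0 d ell).
  split.
  - by move=> x; rewrite UF.
  - move=> x t; rewrite UF; case: t => [s| |] //; last first.
      by move=> _; exists 1 => // y _; rewrite UF ltNye.
    rewrite lte_fin => sx.
    have l1 : 0 < ell x + 1 by rewrite ltr_wpDl.
    exists ((U0r d ell x - s) / (ell x + 1)); first by rewrite divr_gt0 // subr_gt0.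
    move=> y dxy; rewrite UF lte_fin.
    have h1 : (ell x + 1) * d x y < U0r d ell x - s.
      by move: dxy; rewrite ltr_pdivlMr // mulrC.
    have h2 : 0 <= d x y by exact: (met_ge0 md x y).
    have h4 := Utri x y.
    lra.
  - apply/le_anti/andP; split; last first.
      by apply: le_ereal_inf_tmp => _ [y _ <-]; exact: u0_ge0.
    apply/lee_addgt0Pr => e e0; rewrite add0e.
    case: (h0) => xb [hs hc].
    have cs : pcost d ell xb = (fine (pcost d ell xb))%:E.
      by move: hs (cost_ge0 xb md ell0); rewrite /pcost; case: (\sum_(0 <= n <oo) _)%E.
    set s := fine (pcost d ell xb) in cs.
    have [N hN] := cost_approx md ell0 cs e0.
    have hsp := cost_split xb N md ell0.
    have hge := cost_ge0 (sshift N xb) md ell0.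
    move: hsp hge; rewrite cs.
    case E: (pcost d ell (sshift N xb)) => [t| |] //= hsp hge.
    have ht : t < e.
      by move: hsp => [hsp]; lra.
    apply: le_trans (_ : u0 d ell (xb N) <= _)%E.
      by apply: ereal_inf_lbound; exists (xb N).
    apply: le_trans (_ : pcost d ell (sshift N xb) <= _)%E.
      by apply: u0_le => //; exact: shift_cvg.
    by rewrite E lee_fin ltW.
  - move=> x; rewrite mul0e add0e.
    apply/le_anti/andP; split; last exact: U0_G_ge.
    apply: G_le; first exact: UF; first exact: ell0.
    move=> y yx; exists (U0r d ell y); split; first exact: UF.
    have D0 : 0 < d x y by apply: (met_neq md); apply/nesym.
    rewrite ler_pdivrMr // ge_max; apply/andP; split; first exact: Utri.
    by rewrite mulr_ge0 // ltW.
split => // x.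
apply/le_anti/andP; split; first by apply: ereal_sup_ubound; exists (u0 d ell).
apply: ge_ereal_sup => _ [v sv <-].
apply: u0_lb => xs xs0 hcv.
have := cost_ge0 xs md ell0.
case cs: (pcost d ell xs) => [s| |] //= _; last by rewrite leey.
have vfin := sol_fin (lexx 0) sv.
have Vtri : forall a b, fine (v a) - fine (v b) <= ell a * d a b.
  by move=> a b; have := sol_ineq md (lexx 0) sv a b; rewrite mul0r subr0.
rewrite vfin lee_fin; apply/ler_addgt0Pr => e e0.
have e20 : 0 < e / 2 by rewrite divr_gt0.
have : (ereal_inf (range v) < (e / 2)%:E)%E.
  by case: sv => _ _ -> _; rewrite lte_fin.
move/ereal_inf_lt => [_ [y _ <-]]; rewrite vfin lte_fin => hy.
have C0 : 0 < d x y + 1 by rewrite ltr_wpDl // (met_ge0 md x y).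
have hle : forall N, \sum_(0 <= i < N) ell (xs i) * d (xs i) (xs i.+1) <= s.
  by move=> N; have := cost_partial xs N md ell0; rewrite cs lee_fin.
have [N hN] := @liminf_lemma R (fun n => ell (xs n)) (fun n => d (xs n) (xs n.+1))
  (d x y + 1) s (e / 2) (fun n => ell0 _) (fun n => met_ge0 md _ _) hcv C0 e20
  (fun e' e'0 => cost_approx md ell0 cs e'0) hle.
have tele : forall n, fine (v x) - fine (v (xs n)) <=
    \sum_(0 <= i < n) ell (xs i) * d (xs i) (xs i.+1).
  elim=> [|n IH]; first by rewrite big_geq // xs0 subrr.
  rewrite big_nat_recr //=; have := Vtri (xs n) (xs n.+1); lra.
have hS := hle N.
have htri := tri_sum xs N md; rewrite xs0 in htri.
have hd : d (xs N) y <= d x (xs N) + d x y.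
  by rewrite (met_sym md x (xs N)); exact: met_tri.
have hl : ell (xs N) * d (xs N) y <=
    ell (xs N) * (\sum_(0 <= i < N) d (xs i) (xs i.+1) + (d x y + 1)).
  by rewrite ler_wpM2l //; lra.
have := Vtri (xs N) y; have := tele N.
lra.
Qed.

Unset Implicit Arguments.

Theorem corollary4p7 (R : realType) (X : Type) (d : X -> X -> R)
    (ell : X -> R) :
  is_metric d ->
  (forall x, 0 <= ell x) ->
  lsc d (fun x => (ell x)%:E) ->
  ereal_inf (range (fun x => (ell x)%:E)) = 0%E ->
  (forall lam : R, 0 < lam ->
     is_perron_solution d ell lam
       (Tinf d ell lam (fun x => (ell x / lam)%:E))) /\
  (H0 d ell -> is_perron_solution d ell 0 (u0 d ell)).
Proof.
move=> md ell0 hlsc inf0; split.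
  by move=> lam lam0; exact: part_pos.
by move=> h0; exact: part_zero.
Qed.
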